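(* Let $G$ be a proper interval graph on vertex set $[n]$, $t\ge2$, and $I=I_t(G)\subset K[x_1,\dots,x_n]$. Then for every positive integer $m$, $I^m$ has linear quotients.
   Context: $I_t(G)$ is the ideal generated by all squarefree monomials $x_{i_1}\cdots x_{i_t}$ with $\{i_1,\dots,i_t\}$ an independent set of $G$. A monomial ideal $J$ has linear quotients if its minimal monomial generators can be ordered $w_1,\dots,w_r$ so that for each $i\ge2$ the colon ideal $\langle w_1,\dots,w_{i-1}\rangle : w_i$ is generated by variables. A proper interval graph is a graph whose vertices can be assigned real intervals, none properly containing another, such that two vertices are adjacent iff their intervals intersect. *)

(* Defs.v *)
From Stdlib Require Import Reals.
From mathcomp Require Import all_boot.
Set Implicit Arguments. Unset Strict Implicit. Unset Printing Implicit Defensive.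

(* Monomials x^u in K[x_1..x_n] are exponent vectors u : 'I_n -> nat. *)
Definition mon (n : nat) := {ffun 'I_n -> nat}.

Definition mon_one (n : nat) : mon n := [ffun _ => 0%N].
Definition mon_mul (n : nat) (u v : mon n) : mon n := [ffun i => (u i + v i)%N].
Definition mon_dvd (n : nat) (u v : mon n) : bool := [forall i, u i <= v i].

Definition sqfree_mon (n : nat) (A : {set 'I_n}) : mon n :=
  [ffun i => nat_of_bool (i \in A)].

Definition independent (n : nat) (e : rel 'I_n) (A : {set 'I_n}) : bool :=
  [forall x in A, forall y in A, ~~ e x y].

Definition proper_interval_graph (n : nat) (e : rel 'I_n) : Prop :=
  (forall i, ~~ e i i) /\
  exists a b : 'I_n -> R,
    (forall i, Rle (a i) (b i)) /\
    (forall i j, ~ (Rle (a i) (a j) /\ Rle (b j) (b i) /\ (a i <> a j \/ b i <> b j))) /\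
    (forall i j, i <> j -> (e i j <-> (Rle (a i) (b j) /\ Rle (a j) (b i)))).

Definition It_gens (n : nat) (e : rel 'I_n) (t : nat) : seq (mon n) :=
  [seq sqfree_mon A | A <- enum [set A : {set 'I_n} | (#|A| == t) && independent e A]].

Fixpoint pow_gens (n : nat) (gs : seq (mon n)) (m : nat) : seq (mon n) :=
  match m with
  | 0 => [:: mon_one n]
  | m'.+1 => [seq mon_mul g h | g <- gs, h <- pow_gens gs m']
  end.

Definition min_gens (n : nat) (gs : seq (mon n)) : seq (mon n) :=
  undup [seq g <- gs | ~~ has (fun h => mon_dvd h g && (h != g)) gs].

Definition in_mon_ideal (n : nat) (gs : seq (mon n)) (u : mon n) : Prop :=
  exists2 g, g \in gs & mon_dvd g u.

(* The monomial ideal J is generated by variables {x_k : k in S}, tested on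
   monomials (a monomial ideal is determined by the monomials it contains). *)
Definition generated_by_vars (n : nat) (J : mon n -> Prop) : Prop :=
  exists S : {set 'I_n}, forall u : mon n, J u <-> exists2 k, k \in S & (0 < u k)%N.

Definition colon (n : nat) (gs : seq (mon n)) (w : mon n) : mon n -> Prop :=
  fun u => in_mon_ideal gs (mon_mul u w).

Definition linear_quotients (n : nat) (gs : seq (mon n)) : Prop :=
  exists w : seq (mon n),
    perm_eq w (min_gens gs) /\
    forall i, (0 < i < size w)%N ->
      generated_by_vars (colon (take i w) (nth (mon_one n) w i)).

(* Main.v *)
Require Import Defs.
From Stdlib Require Import Reals Classical ClassicalEpsilon.
From mathcomp Require Import all_boot.
From mathcomp Require Import zify.
Set Implicit Arguments. Unset Strict Implicit. Unset Printing Implicit Defensive.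

Definition lexlt (f g : nat -> nat) : Prop :=
  exists k, (forall i, i < k -> f i = g i) /\ f k < g k.

Definition var (n : nat) (z : 'I_n) : mon n := [ffun y => nat_of_bool (y == z)].

Definition bP (P : Prop) : bool := if excluded_middle_informative P then true else false.

Lemma bPP (P : Prop) : bP P <-> P.
Proof. by rewrite /bP; case: excluded_middle_informative. Qed.

Lemma lexlt_irr f : ~ lexlt f f.
Proof. by case=> k [_]; rewrite ltnn. Qed.

Lemma lexlt_trans f g h : lexlt f g -> lexlt g h -> lexlt f h.
Proof.
move=> [k [hk lk]] [k' [hk' lk']]; exists (minn k k'); split.
  by move=> i hi; rewrite hk ?hk' //; lia.
case: (ltngtP k k') => hkk.
- by rewrite -(hk' k hkk).
- by rewrite (hk k' hkk).
- by move: lk lk'; rewrite hkk; lia.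
Qed.

Lemma lexlt_total f g : (exists i, f i <> g i) -> lexlt f g \/ lexlt g f.
Proof.
move=> ex.
have exb : exists i, f i != g i by case: ex => i h; exists i; apply/eqP.
case: (ex_minnP exb) => k /eqP hk kmin.
have hlt : forall i, i < k -> f i = g i.
  move=> i ik; apply/eqP; apply: contraTT ik => h; rewrite -leqNgt; exact: kmin.
case: (ltngtP (f k) (g k)) => // h.
  by left; exists k.
by right; exists k; split => // i ik; rewrite hlt.
Qed.

Section Core.
Variable n : nat.
Variable e : rel 'I_n.
Variable pi : 'I_n -> 'I_n.
Hypothesis pi_inj : injective pi.
Hypothesis eirr : forall i, ~~ e i i.
Hypothesis esym : forall i j, e i j = e j i.
Hypothesis eint : forall i j k : 'I_n, i < j < k -> e (pi i) (pi k) ->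
  e (pi i) (pi j) && e (pi j) (pi k).
Variable t : nat.

Definition U (u : mon n) (i : nat) : nat := oapp (fun j : 'I_n => u (pi j)) 0 (insub i).

Lemma U_val u (j : 'I_n) : U u j = u (pi j).
Proof. by rewrite /U valK. Qed.

Lemma U_ge u i : n <= i -> U u i = 0.
Proof. by move=> h; rewrite /U insubF // ltnNge h. Qed.

Definition E (i j : nat) : bool :=
  [exists a : 'I_n, [exists b : 'I_n, (val a == i) && (val b == j) && e (pi a) (pi b)]].

Lemma E_val (a b : 'I_n) : E a b = e (pi a) (pi b).
Proof.
apply/existsP/idP => [[a' /existsP[b' /andP[/andP[/eqP h1 /eqP h2] h]]]|h].
  have -> : a = a' by apply: val_inj.
  by have -> : b = b' by apply: val_inj.
by exists a; apply/existsP; exists b; rewrite !eqxx.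
Qed.

Lemma E_ord i j : E i j -> exists a b : 'I_n, [/\ val a = i, val b = j & e (pi a) (pi b)].
Proof. by case/existsP=> a /existsP[b /andP[/andP[/eqP h1 /eqP h2] h]]; exists a, b. Qed.

Lemma Esym i j : E i j = E j i.
Proof.
by apply/idP/idP => /E_ord[a [b [ha hb h]]]; rewrite -ha -hb E_val esym.
Qed.

Lemma Eint i j k : i < j < k -> E i k -> E i j && E j k.
Proof.
move=> /andP[hij hjk] /E_ord[a [b [ha hb h]]].
have jn : j < n by have := ltn_ord b; rewrite hb; lia.
have := eint (i:=a) (j:=Ordinal jn) (k:=b); rewrite ha hb hij hjk => /(_ isT h).
by rewrite -!E_val /= ha hb.
Qed.

Definition S (f : nat -> nat) x y := \sum_(x <= i < y.+1) f i.
Definition ci x y := [&& x <= y, y < n & (x == y) || E x y].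

Lemma ci_E x y i j : ci x y -> x <= i -> i < j -> j <= y -> E i j.
Proof.
case/and3P=> xy yn /orP[/eqP<-|Exy] xi ij jy; first by lia.
have Eiy : E i y.
  case: (ltngtP x i) xi => // [xi' _|<- _]; last by [].
  by case/andP: (Eint (i:=x) (j:=i) (k:=y) ltac:(apply/andP; split; lia) Exy).
case: (ltngtP j y) jy => // [jy' _|-> _]; last by [].
by case/andP: (Eint (i:=i) (j:=j) (k:=y) ltac:(apply/andP; split; lia) Eiy).
Qed.

Definition deg (u : mon n) := \sum_(z : 'I_n) u z.
Definition Q (f : nat -> nat) k := \sum_(0 <= i < k) f i.

Lemma S_split f x k y : x <= k <= y -> S f x y = S f x k + S f k.+1 y.
Proof. by move=> /andP[h1 h2]; rewrite /S -big_cat_nat //; lia. Qed.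

Lemma S_last f x y : x <= y -> S f x y = \sum_(x <= i < y) f i + f y.
Proof. by move=> h; rewrite /S big_nat_recr. Qed.

Lemma S_term f x c y : x <= c <= y -> f c <= S f x y.
Proof.
move=> /andP[h1 h2]; rewrite (@S_split f x c y) ?h1 ?h2 // S_last //.
lia.
Qed.

Lemma S_add f g x y : S (fun i => f i + g i) x y = S f x y + S g x y.
Proof. by rewrite /S big_split. Qed.

Lemma S_le f g x y : (forall i, f i <= g i) -> S f x y <= S g x y.
Proof. by move=> h; apply: leq_sum => i _. Qed.

Lemma S_ind c x y : S (fun i => nat_of_bool (i == c)) x y = (x <= c <= y).
Proof.
rewrite /S -big_mkcond /= sum1_count.
have -> : count (fun i => i == c) (index_iota x y.+1) = count_mem c (index_iota x y.+1).
  by apply: eq_count => i; rewrite eq_sym.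
by rewrite count_uniq_mem ?iota_uniq // mem_index_iota ltnS.
Qed.

Lemma Q_split f x y : x <= y -> Q f y = Q f x + \sum_(x <= i < y) f i.
Proof. by move=> h; rewrite /Q -big_cat_nat. Qed.

Lemma QS f x y : x <= y.+1 -> Q f y.+1 = Q f x + S f x y.
Proof. by move=> h; rewrite /S; apply: Q_split. Qed.

Lemma QS1 f k : Q f k.+1 = Q f k + f k.
Proof. by rewrite /Q big_nat_recr. Qed.

Lemma Q_mono f k k' : k <= k' -> Q f k <= Q f k'.
Proof. by move=> h; rewrite (Q_split f h) leq_addr. Qed.

Lemma Q_deg u : Q (U u) n = deg u.
Proof.
rewrite /Q (big_mkord xpredT) /deg [RHS](reindex_inj pi_inj) /=.
by apply: eq_bigr => j _; rewrite U_val.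
Qed.

Lemma Q_big u k : n <= k -> Q (U u) k = deg u.
Proof.
move=> h; rewrite (Q_split _ h) Q_deg big1_seq ?addn0 // => i.
by move=> /andP[_]; rewrite mem_index_iota => /andP[hi _]; rewrite U_ge.
Qed.

Lemma U_mul g h i : U (mon_mul g h) i = U g i + U h i.
Proof. by rewrite /U; case: insub => //= j; rewrite ffunE. Qed.

Lemma U_one i : U (mon_one n) i = 0.
Proof. by rewrite /U; case: insub => //= j; rewrite ffunE. Qed.

Lemma deg_mul g h : deg (mon_mul g h) = deg g + deg h.
Proof. by rewrite /deg -big_split; apply: eq_bigr => z _; rewrite ffunE. Qed.

Lemma deg_sqfree A : deg (sqfree_mon A) = #|A|.
Proof.
rewrite /deg -sum1_card [RHS]big_mkcond; apply: eq_bigr => z _; rewrite ffunE.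
by case: (z \in A).
Qed.

Lemma U_sqfree_le1 A i : U (sqfree_mon A) i <= 1.
Proof. by rewrite /U; case: insub => //= j; rewrite ffunE; case: (_ \in _). Qed.

Lemma U_sqfree_pos A i : 0 < U (sqfree_mon A) i ->
  exists a : 'I_n, val a = i /\ pi a \in A.
Proof.
rewrite /U; case: insubP => //= j _ <-; rewrite ffunE.
by case h: (_ \in _) => // _; exists j.
Qed.

Lemma sum_le1 (f : nat -> nat) x k : (forall i, f i <= 1) ->
  (forall i j, x <= i -> i < j -> j < k -> 0 < f i -> 0 < f j -> False) ->
  \sum_(x <= i < k) f i <= 1.
Proof.
move=> f1; elim: k => [|k IH] H; first by rewrite big_geq.
case: (leqP x k) => xk; last by rewrite big_geq.
rewrite big_nat_recr //=.
case: (posnP (f k)) => fk.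
  by rewrite fk addn0; apply: IH => i j *; apply: (H i j) => //; lia.
rewrite big1_seq ?add0n ?f1 // => i /andP[_]; rewrite mem_index_iota => /andP[h1 h2].
apply/eqP; rewrite -leqn0 leqNgt; apply/negP => fi.
by apply: (H i k).
Qed.

Definition Gen m (u : mon n) :=
  deg u = t * m /\ forall x y, ci x y -> S (U u) x y <= m.

Lemma It_gensP g : g \in It_gens e t ->
  exists A, [/\ g = sqfree_mon A, #|A| = t & independent e A].
Proof.
case/mapP=> A; rewrite mem_enum inE => /andP[/eqP h1 h2] ->.
by exists A.
Qed.

Lemma sqfree_S A x y : independent e A -> ci x y -> S (U (sqfree_mon A)) x y <= 1.
Proof.
move=> ind cxy; apply: sum_le1 => [i|i j xi ij jy]; first exact: U_sqfree_le1.
move=> /U_sqfree_pos[a [ha Aa]] /U_sqfree_pos[b [hb Ab]].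
have := ci_E cxy xi ij; rewrite ltnS in jy => /(_ jy).
rewrite -ha -hb E_val.
by move: ind => /forall_inP/(_ _ Aa)/forall_inP/(_ _ Ab) /negbTE ->.
Qed.

Lemma necessity m u : u \in pow_gens (It_gens e t) m -> Gen m u.
Proof.
elim: m u => [|m IH] u /=.
  rewrite mem_seq1 => /eqP ->; split.
    by rewrite muln0 /deg big1 // => z _; rewrite ffunE.
  by move=> x y _; rewrite /S big1 // => i _; rewrite U_one.
case/allpairsP=> [[g h] [/= /It_gensP[A [-> cA ind]] hh ->]].
have [dh Sh] := IH h hh.
split; first by rewrite deg_mul deg_sqfree dh cA mulnS.
move=> x y cxy.
have -> : S (U (mon_mul (sqfree_mon A) h)) x y = S (U (sqfree_mon A)) x y + S (U h) x y.
  by rewrite -S_add /S; apply: eq_bigr => i _; rewrite U_mul.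
by have := sqfree_S ind cxy; have := Sh x y cxy; lia.
Qed.

Lemma sufficiency m u : Gen m u -> u \in pow_gens (It_gens e t) m.
Proof.
elim: m u => [|m IH] u [du Su] /=.
  rewrite mem_seq1; apply/eqP/ffunP => z; rewrite ffunE.
  have : deg u == 0 by rewrite du muln0.
  by rewrite /deg sum_nat_eq0 => /forallP/(_ z)/implyP/(_ isT)/eqP.
pose P s y := (s * m.+1 < Q (U u) y.+1) || (n <= y).
have exP s : exists y, P s y by exists n; rewrite /P leqnn orbT.
pose a s := ex_minn (exP s).
have a_min s y : P s y -> a s <= y by rewrite /a; case: ex_minnP => k _ h; apply: h.
have a_P s : P s (a s) by rewrite /a; case: ex_minnP.
have a_lt s : s < t -> a s < n.
  move=> st; case: (ltnP (a s) n) => // h.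
  have n0 : 0 < n.
    case: (posnP n) => // hn; move: du; rewrite -Q_deg hn /Q big_geq //; lia.
  suff : a s <= n.-1 by lia.
  apply: a_min; apply/orP; left; rewrite prednK // Q_deg du ltn_pmul2r //.
have a_hi s : s < t -> s * m.+1 < Q (U u) (a s).+1.
  by move=> st; have := a_P s; rewrite /P (leqNgt n) a_lt // orbF.
have a_lo s : Q (U u) (a s) <= s * m.+1.
  case E0: (a s) => [|k]; first by rewrite /Q big_geq.
  case: (leqP (Q (U u) k.+1) (s * m.+1)) => // hlt.
  have := a_min s k; rewrite /P hlt E0 => /(_ isT); lia.
have a_far s s' : s < s' -> s' < t -> a s < a s' /\ ~~ E (a s) (a s').
  move=> ss' st'.
  have h0 : s.+1 * m.+1 <= s' * m.+1 by rewrite leq_mul2r ss' orbT.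
  rewrite mulSn in h0.
  have h1 : a s <= a s'.
    apply: a_min; apply/orP; left; have := a_hi s' st'; lia.
  have hS : m.+1 < S (U u) (a s) (a s').
    have := QS (U u) (x:=a s) (y:=a s') ltac:(lia).
    have := a_hi s' st'; have := a_lo s; lia.
  have nci : ~~ ci (a s) (a s') by apply/negP => c; have := Su _ _ c; lia.
  move: nci; rewrite /ci h1 a_lt //= negb_or => /andP[h2 ->]; split=> //.
  by rewrite ltn_neqAle h2 h1.
have Uas s : s < t -> 0 < U u (a s).
  by move=> st; have := QS1 (U u) (a s); have := a_hi s st; have := a_lo s; lia.
pose f (s : 'I_t) : 'I_n := pi (Ordinal (a_lt s (ltn_ord s))).
have f_inj : injective f.
  move=> s s' /pi_inj /(congr1 val) /= h; apply/val_inj => /=.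
  case: (ltngtP s s') => // hlt.
    by have [] := a_far _ _ hlt (ltn_ord s'); rewrite h ltnn.
  by have [] := a_far _ _ hlt (ltn_ord s); rewrite h ltnn.
pose A := f @: [set: 'I_t].
have cA : #|A| = t by rewrite card_imset // cardsT card_ord.
have indA : independent e A.
  apply/forall_inP => x /imsetP[s _ ->]; apply/forall_inP => y /imsetP[s' _ ->].
  rewrite /f; case: (ltngtP s s') => hlt.
  - by have [_] := a_far _ _ hlt (ltn_ord s'); rewrite -E_val.
  - by have [_] := a_far _ _ hlt (ltn_ord s); rewrite -E_val Esym.
  - by have -> : s = s' by apply: val_inj.
have A_le z : (z \in A) <= u z.
  case: (boolP (z \in A)) => // /imsetP[s _ ->]; rewrite /f -U_val /=; exact: Uas.
pose u' := [ffun z => u z - (z \in A)].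
have hu : u = mon_mul (sqfree_mon A) u' by apply/ffunP => z; rewrite !ffunE subnKC.
have hU i : U u i = U (sqfree_mon A) i + U u' i by rewrite {1}hu U_mul.
have Gu' : Gen m u'.
  split.
    have : deg u = t + deg u' by rewrite {1}hu deg_mul deg_sqfree cA.
    by rewrite du mulnS; lia.
  move=> x y cxy.
  have eqS : S (U u) x y = S (U (sqfree_mon A)) x y + S (U u') x y.
    by rewrite -S_add; apply: eq_bigr => i _; rewrite hU.
  have := Su x y cxy.
  case: (posnP (S (U (sqfree_mon A)) x y)) => hA; last by lia.
  suff : S (U u) x y != m.+1 by lia.
  apply/eqP => hSM.
  case/and3P: cxy => xy yn _.
  have hQ : Q (U u) y.+1 = Q (U u) x + m.+1 by rewrite (QS _ (x:=x)) ?hSM //; lia.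
  pose c := (Q (U u) x + m) %/ m.+1.
  have hc1 : Q (U u) x <= c * m.+1 /\ c * m.+1 < Q (U u) x + m.+1.
    have := divn_eq (Q (U u) x + m) m.+1; have := ltn_pmod (Q (U u) x + m) (ltn0Sn m).
    rewrite -/c; lia.
  have Qy : Q (U u) y.+1 <= t * m.+1 by rewrite -du -(Q_deg u); apply: Q_mono.
  have ct : c < t by rewrite -(ltn_pmul2r (ltn0Sn m)); lia.
  have hay : a c <= y by apply: a_min; apply/orP; left; lia.
  have hax : x <= a c.
    rewrite leqNgt; apply/negP => h.
    have := a_hi c ct; have := Q_mono (U u) h; lia.
  have : 1 <= S (U (sqfree_mon A)) x y.
    apply: leq_trans (S_term _ (c:=a c) _); last by rewrite hax hay.
    rewrite -[a c]/(val (Ordinal (a_lt c ct))) U_val ffunE.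
    suff -> : pi (Ordinal (a_lt c ct)) \in A by [].
    apply/imsetP; exists (Ordinal ct) => //; rewrite /f; congr pi; exact: val_inj.
  by lia.
rewrite hu; apply: allpairs_f; last exact: IH.
by apply: map_f; rewrite mem_enum inE cA eqxx indA.
Qed.

Lemma Q_ind c k : Q (fun i => nat_of_bool (i == c)) k = (c < k).
Proof.
rewrite /Q -big_mkcond /= sum1_count.
have -> : count (fun i => i == c) (index_iota 0 k) = count_mem c (index_iota 0 k).
  by apply: eq_count => i; rewrite eq_sym.
by rewrite count_uniq_mem ?iota_uniq // mem_index_iota.
Qed.

Lemma lq_step m u v : Gen m u -> Gen m v -> lexlt (U u) (U v) ->
  exists k : 'I_n, exists w, [/\ Gen m w, lexlt (U u) (U w), u (pi k) < v (pi k)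
     & mon_dvd w (mon_mul (var (pi k)) u)].
Proof.
move=> [du Su] [dv Sv] [k0 [hk hlt]].
have k0n : k0 < n by case: (ltnP k0 n) => // h; move: hlt; rewrite !U_ge.
have Qk : Q (U u) k0.+1 < Q (U v) k0.+1.
  rewrite !QS1; have -> : Q (U u) k0 = Q (U v) k0.
    by apply: eq_big_nat => i /andP[_ hi]; apply: hk.
  lia.
pose pl l := (k0 < l) && (0 < U u l).
have exl : exists l, pl l.
  apply: NNPP => H.
  have : Q (U u) n = Q (U u) k0.+1.
    rewrite (Q_split _ (x:=k0.+1) (y:=n)) // big1_seq ?addn0 // => i /andP[_].
    rewrite mem_index_iota => /andP[h1 _]; case: (posnP (U u i)) => // hp.
    by exfalso; apply: H; exists i; rewrite /pl h1 hp.
  have := Q_mono (U v) k0n; rewrite !Q_deg du dv; lia.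
pose l := ex_minn exl.
have [kl ul] : k0 < l /\ 0 < U u l by rewrite /l; case: ex_minnP => j /andP[h1 h2].
have lmin : forall i, pl i -> l <= i by rewrite /l; case: ex_minnP.
have ln : l < n by case: (ltnP l n) => // h; move: ul; rewrite U_ge.
have zero i : k0 < i -> i < l -> U u i = 0.
  move=> h1 h2; case: (posnP (U u i)) => // hp.
  by have := lmin i; rewrite /pl h1 hp => /(_ isT); lia.
pose k' := Ordinal k0n; pose l' := Ordinal ln.
pose w : mon n := [ffun z => u z + (z == pi k') - (z == pi l')].
have Uw i : U w i + (i == l) = U u i + (i == k0).
  case: (ltnP i n) => hi; last first.
    rewrite !U_ge //; have -> : (i == l) = false by apply/eqP; lia.
    by have -> : (i == k0) = false by apply/eqP; lia.
  have Ui : U u i = u (pi (Ordinal hi)) by rewrite -U_val.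
  have e1 : (pi (Ordinal hi) == pi k') = (i == k0) by rewrite (inj_eq pi_inj).
  have e2 : (pi (Ordinal hi) == pi l') = (i == l) by rewrite (inj_eq pi_inj).
  rewrite -[U w i]/(U w (Ordinal hi)) U_val ffunE e1 e2 -Ui.
  case: (i =P l) => [il|_]; last by rewrite subn0 addn0.
  have -> : (i == k0) = false by apply/eqP; lia.
  move: ul; rewrite -il; lia.
have Sw x y : S (U w) x y + (x <= l <= y) = S (U u) x y + (x <= k0 <= y).
  by rewrite -!S_ind -!S_add; apply: eq_bigr => i _; apply: Uw.
exists k', w; split.
- split.
    have H : Q (U w) n + Q (fun i => nat_of_bool (i == l)) n =
             Q (U u) n + Q (fun i => nat_of_bool (i == k0)) n.
      by rewrite /Q -!big_split; apply: eq_bigr => i _; apply: Uw.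
    by rewrite !Q_deg !Q_ind ln k0n du in H; lia.
  move=> x y cxy.
  have key := Sw x y; have Suxy := Su x y cxy.
  case: (boolP (x <= k0 <= y)) => hk0; last by move: key; rewrite (negbTE hk0); lia.
  case: (boolP (x <= l <= y)) => hl; first by move: key; rewrite hk0 hl; lia.
  have ly : y < l by move: hl hk0; lia.
  case/andP: hk0 => xk ky.
  rewrite (@S_split _ x k0 y) ?xk ?ky //.
  have -> : S (U w) k0.+1 y = 0.
    rewrite /S big1_seq // => i /andP[_]; rewrite mem_index_iota => /andP[h1 h2].
    have := Uw i; rewrite zero; [|lia|lia].
    have -> : (i == l) = false by apply/eqP; lia.
    have -> : (i == k0) = false by apply/eqP; lia.
    by move=> /=; lia.
  have := Sw x k0; rewrite xk leqnn /=.
  have -> : (x <= l <= k0) = false by lia.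
  have : S (U u) x k0 + 1 <= S (U v) x k0.
    rewrite !S_last //.
    have -> : \sum_(x <= i < k0) U u i = \sum_(x <= i < k0) U v i.
      by apply: eq_big_nat => i /andP[_ hi]; apply: hk.
    lia.
  have : S (U v) x k0 <= S (U v) x y by rewrite (@S_split _ x k0 y) ?xk ?ky // leq_addr.
  have := Sv x y cxy; lia.
- exists k0; split.
    move=> i ik; have := Uw i.
    have -> : (i == l) = false by apply/eqP; lia.
    have -> : (i == k0) = false by apply/eqP; lia.
    by move=> /=; lia.
  have := Uw k0; rewrite eqxx; have -> : (k0 == l) = false by apply/eqP; lia.
  lia.
- by rewrite -!U_val.
- by apply/forallP => z; rewrite !ffunE; lia.
Qed.

Definition lexge (u v : mon n) : bool := (u == v) || bP (lexlt (U v) (U u)).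

Lemma U_inj u v : (forall i, U u i = U v i) -> u = v.
Proof.
move=> h; apply/ffunP => z; rewrite -(f_invF pi_inj z) -!U_val; exact: h.
Qed.

Lemma lexge_refl : reflexive lexge.
Proof. by move=> u; rewrite /lexge eqxx. Qed.

Lemma lexge_total : total lexge.
Proof.
move=> u v; case: (eqVneq u v) => [->|neq]; first by rewrite lexge_refl.
have : exists i, U u i <> U v i.
  apply: NNPP => H; move/eqP: neq; apply; apply: U_inj => i.
  by apply: NNPP => h; apply: H; exists i.
case/lexlt_total => h; rewrite /lexge.
  by apply/orP; right; apply/orP; right; apply/bPP.
by apply/orP; left; apply/orP; right; apply/bPP.
Qed.

Lemma lexge_trans : transitive lexge.
Proof.
move=> v u w; rewrite /lexge => /orP[/eqP->|/bPP h1] // /orP[/eqP<-|/bPP h2].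
  by apply/orP; right; apply/bPP.
by apply/orP; right; apply/bPP; apply: lexlt_trans h2 h1.
Qed.

Lemma dvd_eq h g : mon_dvd h g -> deg h = deg g -> h = g.
Proof.
move=> /forallP hle hd; apply/ffunP => z.
have : \sum_z (g z - h z) == 0 by rewrite sumnB //; rewrite /deg in hd; rewrite hd subnn.
rewrite sum_nat_eq0 => /forallP/(_ z)/implyP/(_ isT)/eqP; move: (hle z) => le1 /eqP; rewrite subn_eq0 => le2; apply/eqP; by rewrite eqn_leq le1 le2.
Qed.

Theorem core_lq m : linear_quotients (pow_gens (It_gens e t) m).
Proof.
set G := pow_gens (It_gens e t) m.
have memMG g : (g \in min_gens G) = (g \in G).
  rewrite /min_gens mem_undup mem_filter; apply/andP/idP => [[_ //]|gG]; split => //.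
  apply/hasP => [[h hG /andP[hd hne]]].
  have [dh _] := necessity hG; have [dg _] := necessity gG.
  by move/eqP: hne; apply; apply: dvd_eq => //; rewrite dh dg.
exists (sort lexge (min_gens G)); split; first by apply/permPl; exact: perm_sort.
set L := sort lexge (min_gens G).
move=> i /andP[i0 iL].
have sortedL : sorted lexge L := sort_sorted lexge_total _.
have uL : uniq L by rewrite sort_uniq /min_gens undup_uniq.
have memL g : (g \in L) = (g \in G) by rewrite mem_sort memMG.
set u := nth (mon_one n) L i.
have uG : u \in G by rewrite -memL mem_nth.
have sle j j' : j <= j' -> j' < size L -> lexge (nth (mon_one n) L j) (nth (mon_one n) L j').
  move=> jj jL; apply: (sorted_leq_nth lexge_trans lexge_refl) => //; rewrite inE; lia.
exists [set z | has (fun g => mon_dvd g (mon_mul (var z) u)) (take i L)].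
move=> f; split.
- case=> g gT /forallP dv.
  set j := index g (take i L).
  have szT : size (take i L) = i by rewrite size_takel // ltnW.
  have jlt : j < i by rewrite -szT index_mem.
  have gj : g = nth (mon_one n) L j by rewrite -(nth_take _ jlt) nth_index.
  have jL : j < size L by apply: ltn_trans jlt iL.
  have gG : g \in G by rewrite -memL gj mem_nth.
  have neq : g != u by rewrite gj nth_uniq // neq_ltn jlt.
  have : lexge g u by rewrite gj; apply: sle => //; apply: ltnW.
  rewrite /lexge (negbTE neq) /= => /bPP lt.
  have [k [w [Gw ltw uk dvw]]] := lq_step (necessity uG) (necessity gG) lt.
  exists (pi k); last by have := dv (pi k); rewrite ffunE; lia.
  rewrite inE; apply/hasP; exists w => //.
  have wL : w \in L by rewrite memL; exact: sufficiency Gw.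
  set j' := index w L.
  have j'L : j' < size L by rewrite index_mem.
  have wj : nth (mon_one n) L j' = w by rewrite nth_index.
  case: (ltnP j' i) => hj.
    by rewrite -wj -(nth_take _ hj); apply: mem_nth; rewrite szT.
  exfalso; have := sle i j' hj j'L; rewrite wj /lexge => /orP[/eqP uw|/bPP h].
    by rewrite -uw in ltw; apply: lexlt_irr ltw.
  by apply: (@lexlt_irr (U u)); apply: lexlt_trans ltw h.
- case=> z; rewrite inE => /hasP[g gT /forallP dvg] fz; exists g => //.
  apply/forallP => y; have := dvg y; rewrite !ffunE.
  by case: (y =P z) => [->|_] /=; lia.
Qed.

End Core.


From Stdlib Require Import Lra.

Section Build.
Variable n : nat.
Variable e : rel 'I_n.
Variables a b : 'I_n -> R.
Hypothesis hab : forall i, Rle (a i) (b i).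
Hypothesis hnc : forall i j, ~ (Rle (a i) (a j) /\ Rle (b j) (b i) /\ (a i <> a j \/ b i <> b j)).
Hypothesis hadj : forall i j, i <> j -> (e i j <-> (Rle (a i) (b j) /\ Rle (a j) (b i))).

Definition rle (i j : 'I_n) : bool := if Rle_dec (a i) (a j) then true else false.

Lemma rle_total : total rle.
Proof. by move=> i j; rewrite /rle; case: Rle_dec => h1; case: Rle_dec => h2 //=; exfalso; lra. Qed.

Lemma rle_trans : transitive rle.
Proof.
move=> j i k; rewrite /rle; case: Rle_dec => h1 //; case: Rle_dec => h2 //;
  case: Rle_dec => h3 //; exfalso; lra.
Qed.

Lemma rle_refl : reflexive rle.
Proof. by move=> i; rewrite /rle; case: Rle_dec => h //; exfalso; lra. Qed.

Definition ordl := sort rle (enum 'I_n).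
Definition pif (j : 'I_n) : 'I_n := nth j ordl j.

Lemma size_ordl : size ordl = n.
Proof. by rewrite /ordl size_sort size_enum_ord. Qed.

Lemma pif_inj : injective pif.
Proof.
move=> j k; rewrite /pif (set_nth_default j k) ?size_ordl // => h.
have u : uniq ordl by rewrite /ordl sort_uniq enum_uniq.
apply/val_inj/eqP; rewrite -(nth_uniq j (s:=ordl)) ?size_ordl //.
  by apply/eqP; exact: h.
all: exact: ltn_ord.
Qed.

Lemma pif_mono (i j : 'I_n) : i <= j -> Rle (a (pif i)) (a (pif j)).
Proof.
move=> ij.
have : rle (pif i) (pif j).
  rewrite /pif (set_nth_default i j) ?size_ordl //.
  apply: (sorted_leq_nth rle_trans rle_refl) => //; rewrite ?inE ?size_ordl //.
  exact: sort_sorted rle_total _.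
by rewrite /rle; case: Rle_dec.
Qed.

Lemma bmono x y : Rle (a x) (a y) -> Rle (b x) (b y).
Proof.
move=> h; case: (Rle_or_lt (b x) (b y)) => // h'; exfalso.
apply (@hnc x y); split => //; split; [lra|right; lra].
Qed.

Lemma e_sym i j : e i j = e j i.
Proof.
case: (eqVneq i j) => [->//|neq].
have neq' : j <> i by move=> h; rewrite h eqxx in neq.
have neq'' : i <> j by move=> h; rewrite h eqxx in neq.
apply/idP/idP => h.
  by apply/(hadj neq'); have := proj1 (hadj neq'') h; lra.
by apply/(hadj neq''); have := proj1 (hadj neq') h; lra.
Qed.

Lemma e_int (i j k : 'I_n) : i < j < k -> e (pif i) (pif k) ->
  e (pif i) (pif j) && e (pif j) (pif k).
Proof.
move=> /andP[ij jk] h.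
have dij : pif i <> pif j by move=> /pif_inj hh; rewrite hh ltnn in ij.
have djk : pif j <> pif k by move=> /pif_inj hh; rewrite hh ltnn in jk.
have dik : pif i <> pif k by move=> /pif_inj hh; rewrite hh in ij; have := ltn_trans ij jk; rewrite ltnn.
have a1 := pif_mono (ltnW ij); have a2 := pif_mono (ltnW jk).
have b1 := bmono a1; have b2 := bmono a2.
have [h1 h2] := proj1 (hadj dik) h.
have := hab (pif i); have := hab (pif j); have := hab (pif k) => *.
apply/andP; split.
  by apply/(hadj dij); lra.
by apply/(hadj djk); lra.
Qed.

End Build.

Theorem theorem2p7 (n : nat) (e : rel 'I_n) (t : nat) :
  proper_interval_graph e -> (2 <= t)%N ->
  forall m : nat, (0 < m)%N -> linear_quotients (pow_gens (It_gens e t) m).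
Proof.
move=> [eirr [a [b [hab [hnc hadj]]]]] _ m _.
have h1 := @pif_inj n a.
have h2 := e_sym hadj.
have h3 := e_int hab hnc hadj.
exact: (core_lq h1 eirr h2 h3 t m).
Qed.
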